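(* Let $n\ge 3$, let $H_0$ be the cyclic subgroup of $\operatorname{Sym}_n$ generated by $(1,2,\dots,n)$, and let $H$ be a subgroup of $\operatorname{Sym}_n$ with $H_0\subseteq H$. Then $G_n(H)\cong F\times\mathbb{Z}$, where the factor $\mathbb{Z}$ is generated by the (central) image of $z=a_1a_2\cdots a_n$, and $F$ is the group with generators $a_2,\dots,a_n$ and defining relations $$a_2a_3\cdots a_n=a_{\tau(k+1)}\cdots a_{\tau(n)}\,a_{\tau(1)}\cdots a_{\tau(k-1)}$$ for all $\tau\in H$, where $k=\tau^{-1}(1)$.
   Context: For $n\ge 3$ and a subset $H\subseteq\operatorname{Sym}_n$, $G_n(H)$ denotes the group with generators $a_1,\dots,a_n$ and defining relations $a_1a_2\cdots a_n=a_{\sigma(1)}a_{\sigma(2)}\cdots a_{\sigma(n)}$ for all $\sigma\in H$. *)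

(* Defs.v *)
From HB Require Import structures.
From mathcomp Require Import all_boot all_order all_algebra all_fingroup.
Set Implicit Arguments. Unset Strict Implicit. Unset Printing Implicit Defensive.

(* Words in the free group on X: a letter (x, true) stands for x,
   (x, false) for x^-1. *)
Definition word (X : Type) := seq (X * bool).

Definition pos (X : Type) (s : seq X) : word X := [seq (x, true) | x <- s].

Definition wmap (X Y : Type) (f : X -> Y) (w : word X) : word Y :=
  [seq (f p.1, p.2) | p <- w].

(* Equality in the group < X | l = r for R l r >: the congruence on words
   generated by free cancellation and the defining relations. *)
Inductive peq (X : Type) (R : word X -> word X -> Prop) : word X -> word X -> Prop :=
| peq_refl w : peq R w w
| peq_sym w1 w2 : peq R w1 w2 -> peq R w2 w1
| peq_trans w1 w2 w3 : peq R w1 w2 -> peq R w2 w3 -> peq R w1 w3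
| peq_cancel (u v : word X) x b : peq R (u ++ (x, b) :: (x, ~~ b) :: v) (u ++ v)
| peq_rel (u v l r : word X) : R l r -> peq R (u ++ l ++ v) (u ++ r ++ v).

(* The n-cycle (1,2,...,n), 0-indexed: i |-> i+1 mod n. *)
Definition cycle_perm (n : nat) : {perm 'I_n} := perm (@ordS_inj n).

(* Relations of G_n(H): a_1 ... a_n = a_{s(1)} ... a_{s(n)} for s in H
   (generators a_1..a_n are indexed by 'I_n, a_i <-> i-1). *)
Definition relG (n : nat) (H : {set {perm 'I_n}}) (l r : word 'I_n) : Prop :=
  exists2 s, s \in H & l = pos (enum 'I_n) /\ r = pos [seq s i | i <- enum 'I_n].

Definition zword (n : nat) : word 'I_n := pos (enum 'I_n).

Definition gensF (n : nat) := {i : 'I_n | 0 < val i}.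

(* Relations of F: a_2 ... a_n = a_{t(k+1)}...a_{t(n)} a_{t(1)}...a_{t(k-1)}
   for t in H, where k = t^{-1}(1), i.e. t k = 1 (0-indexed: t k = 0). *)
Definition relF (n : nat) (H : {set {perm 'I_n}}) (l r : word (gensF n)) : Prop :=
  exists2 t, t \in H & exists k : 'I_n,
    val (t k) = 0 /\
    wmap (fun i : gensF n => (val i : 'I_n)) l = pos (filter (fun j : 'I_n => 0 < nat_of_ord j) (enum 'I_n)) /\
    wmap (fun i : gensF n => (val i : 'I_n)) r = pos ([seq t j | j <- filter (fun j : 'I_n => k < j) (enum 'I_n)]
                      ++ [seq t j | j <- filter (fun j : 'I_n => j < k) (enum 'I_n)]).

(* Main.v *)
Require Import Defs.
From HB Require Import structures.
From mathcomp Require Import all_boot all_order all_algebra all_fingroup.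
Import GRing.Theory.
Set Implicit Arguments. Unset Strict Implicit. Unset Printing Implicit Defensive.
Set Implicit Arguments. Unset Strict Implicit. Unset Printing Implicit Defensive.

Definition winv (X : Type) (w : word X) : word X := rev [seq (p.1, ~~ p.2) | p <- w].

Lemma winv_cat (X : Type) (a b : word X) : winv (a ++ b) = winv b ++ winv a.
Proof. by rewrite /winv map_cat rev_cat. Qed.

Lemma winvK (X : Type) (w : word X) : winv (winv w) = w.
Proof.
rewrite /winv map_rev revK -map_comp.
by elim: w => //= [[x b] w ->] /=; rewrite negbK.
Qed.

Lemma winv_cons (X : Type) (p : X * bool) (w : word X) :
  winv (p :: w) = winv w ++ [:: (p.1, ~~ p.2)].
Proof. by rewrite -cat1s winv_cat. Qed.

Lemma peq_ctx (X : Type) (R : word X -> word X -> Prop) a b u v :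
  peq R a b -> peq R (u ++ a ++ v) (u ++ b ++ v).
Proof.
move=> h; elim: h u v => {a b}.
- by move=> w u v; apply: peq_refl.
- by move=> w1 w2 _ IH u v; apply: peq_sym.
- by move=> w1 w2 w3 _ IH1 _ IH2 u v; apply: peq_trans (IH1 u v) (IH2 u v).
- move=> u' v' x b u v.
  have -> : u ++ (u' ++ [:: (x, b), (x, ~~ b) & v']) ++ v
          = (u ++ u') ++ [:: (x, b), (x, ~~ b) & v' ++ v] by rewrite -!catA.
  rewrite !catA -(catA _ v'); exact: peq_cancel.
- move=> u' v' l r h u v.
  have E : forall m, u ++ (u' ++ m ++ v') ++ v = (u ++ u') ++ m ++ (v' ++ v)
    by move=> m; rewrite -!catA.
  rewrite !E; exact: peq_rel.
Qed.

Lemma peq_catl (X : Type) (R : word X -> word X -> Prop) a b u :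
  peq R a b -> peq R (u ++ a) (u ++ b).
Proof. by move=> h; have := peq_ctx u [::] h; rewrite !cats0. Qed.

Lemma peq_catr (X : Type) (R : word X -> word X -> Prop) a b v :
  peq R a b -> peq R (a ++ v) (b ++ v).
Proof. by move=> h; have := peq_ctx [::] v h. Qed.

Lemma peq_cat (X : Type) (R : word X -> word X -> Prop) a a' b b' :
  peq R a a' -> peq R b b' -> peq R (a ++ b) (a' ++ b').
Proof.
move=> h1 h2; apply: peq_trans (peq_catr _ h1) _; exact: peq_catl.
Qed.

Lemma peq_rel0 (X : Type) (R : word X -> word X -> Prop) l r : R l r -> peq R l r.
Proof. by move=> h; have := peq_rel [::] [::] h; rewrite /= !cats0. Qed.

Lemma peq_invr (X : Type) (R : word X -> word X -> Prop) w : peq R (w ++ winv w) [::].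
Proof.
elim: w => [|p w IH] /=; first exact: peq_refl.
rewrite winv_cons catA.
apply: peq_trans (peq_catr _ (peq_catl [:: p] IH)) _.
case: p => x b /=; exact: (@peq_cancel _ R [::] [::] x b).
Qed.

Lemma peq_invl (X : Type) (R : word X -> word X -> Prop) w : peq R (winv w ++ w) [::].
Proof. by have := peq_invr R (winv w); rewrite winvK. Qed.

Lemma peq_inv (X : Type) (R : word X -> word X -> Prop) a b :
  peq R a b -> peq R (winv a) (winv b).
Proof.
move=> h.
apply: peq_trans (_ : peq R (winv a ++ (b ++ winv b)) _).
  by have := peq_catl (winv a) (peq_sym (peq_invr R b)); rewrite cats0.
rewrite catA.
apply: peq_trans (peq_catr _ (peq_catl _ (peq_sym h))) _.
apply: peq_trans (peq_catr _ (peq_invl R a)) _; exact: peq_refl.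
Qed.

Definition subst (X Y : Type) (g : X -> word Y) (w : word X) : word Y :=
  flatten [seq (if p.2 then g p.1 else winv (g p.1)) | p <- w].

Lemma subst_cat (X Y : Type) (g : X -> word Y) a b :
  subst g (a ++ b) = subst g a ++ subst g b.
Proof. by rewrite /subst map_cat flatten_cat. Qed.

Lemma subst_inv (X Y : Type) (g : X -> word Y) w :
  subst g (winv w) = winv (subst g w).
Proof.
elim: w => [|[x b] w IH] //=.
rewrite winv_cons subst_cat IH /subst /= cats0 -/(subst g w) winv_cat.
by case: b => //=; rewrite winvK.
Qed.

Lemma peq_subst (X Y : Type) (R : word X -> word X -> Prop) (S : word Y -> word Y -> Prop)
  (g : X -> word Y) :
  (forall l r, R l r -> peq S (subst g l) (subst g r)) ->
  forall a b, peq R a b -> peq S (subst g a) (subst g b).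
Proof.
move=> hR a b h; elim: h => {a b}.
- move=> w; exact: peq_refl.
- by move=> w1 w2 _ IH; apply: peq_sym.
- by move=> w1 w2 w3 _ IH1 _ IH2; apply: peq_trans IH1 IH2.
- move=> u v x b; rewrite !subst_cat; apply: peq_catl.
  rewrite /subst /= -/(subst g v) catA.
  apply: (@peq_catr _ _ _ [::]).
  case: b => /=; [exact: peq_invr | exact: peq_invl].
- move=> u v l r h; rewrite !subst_cat; apply: peq_ctx; exact: hR.
Qed.

Local Open Scope ring_scope.

Definition pw (X : Type) (a : word X) (k : int) : word X :=
  match k with Posz m => flatten (nseq m a) | Negz m => flatten (nseq m.+1 (winv a)) end.

Lemma flatten_nseqS (X : Type) (a : word X) m :
  flatten (nseq m.+1 a) = flatten (nseq m a) ++ a.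
Proof.
elim: m => [|m IH]; first by rewrite /= cats0.
by change (a ++ flatten (nseq m.+1 a) = flatten (nseq m.+1 a) ++ a); rewrite {1}IH catA.
Qed.

Lemma pw_addS (X : Type) (R : word X -> word X -> Prop) a k :
  peq R (pw a (k + 1)) (pw a k ++ a).
Proof.
case: k => m.
  rewrite (_ : Posz m + 1 = Posz m.+1); last by rewrite -addn1 PoszD.
  rewrite /pw flatten_nseqS; exact: peq_refl.
case: m => [|m].
  rewrite (_ : Negz 0 + 1 = 0); last by rewrite NegzE addNr.
  rewrite /pw /= cats0; apply: peq_sym; exact: peq_invl.
have e : Negz m.+1 + 1 = Negz m by rewrite !NegzE -addn1 PoszD opprD addrNK.
rewrite e /pw (flatten_nseqS _ m.+1) -catA.
by have := peq_catl (flatten (nseq m.+1 (winv a))) (peq_sym (peq_invl R a)); rewrite cats0.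
Qed.

Lemma pw_subS (X : Type) (R : word X -> word X -> Prop) a k :
  peq R (pw a (k - 1)) (pw a k ++ winv a).
Proof.
case: k => m; last first.
  have e : Negz m - 1 = Negz m.+1 by rewrite !NegzE -(addn1 m.+1) PoszD opprD.
  rewrite e /pw (flatten_nseqS _ m.+1); exact: peq_refl.
case: m => [|m].
  have e : Posz 0 - 1 = Negz 0 by rewrite NegzE add0r.
  rewrite e /pw /= cats0; exact: peq_refl.
have e : Posz m.+1 - 1 = Posz m by rewrite -addn1 PoszD addrK.
rewrite e /pw (flatten_nseqS _ m) -catA.
by have := peq_catl (flatten (nseq m a)) (peq_sym (peq_invr R a)); rewrite cats0.
Qed.

Lemma pw_add (X : Type) (R : word X -> word X -> Prop) a k1 k2 :
  peq R (pw a (k1 + k2)) (pw a k1 ++ pw a k2).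
Proof.
case: k2 => m.
  elim: m => [|m IH].
    rewrite addr0 /= cats0; exact: peq_refl.
  have e : Posz m.+1 = Posz m + 1 by rewrite -addn1 PoszD.
  rewrite e addrA; apply: peq_trans (pw_addS R a _) _.
  apply: peq_trans (peq_catr _ IH) _; rewrite -catA.
  apply: peq_catl; apply: peq_sym; exact: pw_addS.
elim: m => [|m IH].
  have e : Negz 0 = 0 - 1 by rewrite NegzE add0r.
  rewrite e addrA addr0; apply: peq_trans (pw_subS R a _) _.
  rewrite /= cats0; exact: peq_refl.
have e : Negz m.+1 = Negz m - 1 by rewrite !NegzE -(addn1 m.+1) PoszD opprD.
rewrite e addrA; apply: peq_trans (pw_subS R a _) _.
apply: peq_trans (peq_catr _ IH) _; rewrite -catA.
apply: peq_catl; apply: peq_sym; exact: pw_subS.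
Qed.

Definition central (X : Type) (R : word X -> word X -> Prop) (a : word X) :=
  forall w, peq R (w ++ a) (a ++ w).

Lemma central_inv (X : Type) (R : word X -> word X -> Prop) a :
  central R a -> central R (winv a).
Proof.
move=> h w.
apply: peq_trans (_ : peq R (winv a ++ (a ++ w) ++ winv a) _).
  rewrite catA; apply: peq_catr; rewrite catA.
  apply: peq_trans (_ : peq R ([::] ++ w) _); first exact: peq_refl.
  apply: peq_catr; apply: peq_sym; exact: peq_invl.
apply: peq_trans (_ : peq R (winv a ++ (w ++ a) ++ winv a) _).
  apply: peq_catl; apply: peq_catr; apply: peq_sym; exact: h.
rewrite -!catA; apply: peq_catl.
by have := peq_catl w (peq_invr R a); rewrite cats0.
Qed.

Lemma central_cat (X : Type) (R : word X -> word X -> Prop) a b :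
  central R a -> central R b -> central R (a ++ b).
Proof.
move=> ha hb w; rewrite catA.
apply: peq_trans (peq_catr _ (ha w)) _; rewrite -!catA; apply: peq_catl; exact: hb.
Qed.

Lemma central_pw (X : Type) (R : word X -> word X -> Prop) a k :
  central R a -> central R (pw a k).
Proof.
move=> ha.
have hn : forall b m, central R b -> central R (flatten (nseq m b)).
  move=> b m hb; elim: m => [|m IH] /=; last exact: central_cat.
  by move=> w; rewrite cats0; exact: peq_refl.
case: k => m; rewrite /pw; [exact: hn | apply: hn; exact: central_inv].
Qed.

Definition es (X : Type) (P : X -> bool) (w : word X) : int :=
  foldr (fun p acc => (if P p.1 then (if p.2 then 1 else -1) else 0) + acc) 0 w.

Lemma es_cat (X : Type) (P : X -> bool) a b : es P (a ++ b) = es P a + es P b.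
Proof. by elim: a => [|p a IH] /=; rewrite ?add0r // IH addrA. Qed.

Lemma es_inv (X : Type) (P : X -> bool) a : es P (winv a) = - es P a.
Proof.
elim: a => [|[x b] a IH] /=; first by rewrite oppr0.
rewrite winv_cons es_cat IH /= addr0 opprD addrC; congr (_ + _).
by case: (P x); case: b; rewrite ?opprK ?oppr0.
Qed.

Lemma es_nseq (X : Type) (P : X -> bool) a m :
  es P (flatten (nseq m a)) = es P a *+ m.
Proof.
elim: m => [|m IH] /=; first by [].
by rewrite es_cat IH mulrS.
Qed.

Lemma es_pw (X : Type) (P : X -> bool) a k : es P a = 1 -> es P (pw a k) = k.
Proof.
move=> h; case: k => m; rewrite /pw es_nseq ?es_inv h.
  by rewrite natz.
by rewrite NegzE mulNrn natz.
Qed.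

Lemma peq_es (X : Type) (R : word X -> word X -> Prop) (P : X -> bool) :
  (forall l r, R l r -> es P l = es P r) ->
  forall a b, peq R a b -> es P a = es P b.
Proof.
move=> hR a b h; elim: h => {a b}.
- by [].
- by move=> w1 w2 _ ->.
- by move=> w1 w2 w3 _ -> _ ->.
- move=> u v x b; rewrite !es_cat /=; congr (_ + _).
  by case: (P x); case: b => //=; rewrite addrA ?addrN ?addNr add0r.
- by move=> u v l r h; rewrite !es_cat (hR _ _ h).
Qed.

Local Close Scope ring_scope.
Set Implicit Arguments. Unset Strict Implicit. Unset Printing Implicit Defensive.

Lemma iota_split n k : k < n ->
  iota 0 n = [seq j <- iota 0 n | j < k] ++ k :: [seq j <- iota 0 n | k < j].
Proof.
move=> kn.
have -> : iota 0 n = iota 0 k ++ k :: iota k.+1 (n - k.+1).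
  have e : iota 0 k.+1 = iota 0 k ++ [:: k] by rewrite -addn1 iotaD.
  by rewrite -{1}(subnKC kn) iotaD e -catA.
rewrite !filter_cat /= ltnn /=.
have h1 : [seq j <- iota 0 k | j < k] = iota 0 k.
  by rewrite (eq_in_filter (a2 := predT)) ?filter_predT // => j; rewrite mem_iota.
have h2 : [seq j <- iota k.+1 (n - k.+1) | j < k] = [::].
  rewrite (eq_in_filter (a2 := pred0)) ?filter_pred0 // => j; rewrite mem_iota /=.
  by case/andP=> h _; rewrite ltnNge ltnW.
have h3 : [seq j <- iota 0 k | k < j] = [::].
  rewrite (eq_in_filter (a2 := pred0)) ?filter_pred0 // => j; rewrite mem_iota /=.
  by rewrite add0n => h; rewrite ltnNge ltnW.
have h4 : [seq j <- iota k.+1 (n - k.+1) | k < j] = iota k.+1 (n - k.+1).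
  by rewrite (eq_in_filter (a2 := predT)) ?filter_predT // => j; rewrite mem_iota; case/andP.
by rewrite h1 h2 h3 h4 cats0.
Qed.

Lemma enum_split n (k : 'I_n) :
  enum 'I_n = filter (fun j : 'I_n => j < k) (enum 'I_n) ++ k :: filter (fun j : 'I_n => k < j) (enum 'I_n).
Proof.
apply: (@inj_map _ _ (@nat_of_ord n) val_inj).
have h : forall q : pred nat, map (@nat_of_ord n) (filter (fun j : 'I_n => q (nat_of_ord j)) (enum 'I_n)) = [seq j <- iota 0 n | q j].
  by move=> q; rewrite -val_enum_ord filter_map.
rewrite map_cat /= (h (fun j => j < k)) (h (fun j => k < j)) val_enum_ord.
exact: iota_split.
Qed.

Lemma map_cycle1 n : map (cycle_perm n) (enum 'I_n) = rot 1 (enum 'I_n).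
Proof.
apply: (@inj_map _ _ (@nat_of_ord n) val_inj).
have e : map (@nat_of_ord n) (map (cycle_perm n) (enum 'I_n)) = map (fun i => i.+1 %% n) (iota 0 n).
  rewrite -val_enum_ord -!map_comp; apply: eq_map => i /=.
  by rewrite /cycle_perm (permE (@ordS_inj n)).
rewrite e map_rot val_enum_ord.
case: n {e} => [|n]; first by [].
have iS : iota 0 n.+1 = rcons (iota 0 n) n by rewrite -cats1 -addn1 iotaD.
rewrite {1}iS map_rcons (_ : iota 0 n.+1 = 0 :: iota 1 n) // rot1_cons modnn; congr rcons.
rewrite -[iota 1 n]/(iota (1 + 0) n) iotaDl.
apply/eq_in_map => i; rewrite mem_iota /= => hi.
by rewrite modn_small // add1n.
Qed.

Lemma map_cycle_pow n m : m <= n ->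
  map (cycle_perm n ^+ m)%g (enum 'I_n) = rot m (enum 'I_n).
Proof.
elim: m => [|m IH] hm.
  rewrite expg0 rot0 -[RHS]map_id; apply: eq_map => i; exact: perm1.
rewrite expgSr (eq_map (permM _ _)) map_comp IH ?(ltnW hm) // map_rot map_cycle1.
by rewrite -rotD addn1 // size_enum_ord.
Qed.
Set Implicit Arguments. Unset Strict Implicit. Unset Printing Implicit Defensive.

Lemma wmap_subst (X Y : Type) (f : X -> Y) w :
  wmap f w = subst (fun x => [:: (f x, true)]) w.
Proof. by elim: w => [|[x b] w IH] //=; rewrite IH; case: b. Qed.

Lemma wmap_cat (X Y : Type) (f : X -> Y) a b : wmap f (a ++ b) = wmap f a ++ wmap f b.
Proof. exact: map_cat. Qed.

Lemma wmap_inv (X Y : Type) (f : X -> Y) a : wmap f (winv a) = winv (wmap f a).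
Proof. by rewrite /wmap /winv map_rev -!map_comp. Qed.

Lemma wmap_pos (X Y : Type) (f : X -> Y) s : wmap f (pos s) = pos (map f s).
Proof. by rewrite /wmap /pos -!map_comp. Qed.

Lemma pos_cat (X : Type) (a b : seq X) : pos (a ++ b) = pos a ++ pos b.
Proof. exact: map_cat. Qed.

Lemma peq_cancel1 (X : Type) (R : word X -> word X -> Prop) x b w :
  peq R ((x, b) :: (x, ~~ b) :: w) w.
Proof. exact: (@peq_cancel _ R [::] w x b). Qed.

Lemma peq_cancel2 (X : Type) (R : word X -> word X -> Prop) x b w :
  peq R ((x, ~~ b) :: (x, b) :: w) w.
Proof. by have := @peq_cancel _ R [::] w x (~~ b); rewrite negbK. Qed.

Lemma subst_nseq (X Y : Type) (g : X -> word Y) a m :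
  subst g (flatten (nseq m a)) = flatten (nseq m (subst g a)).
Proof. by elim: m => [|m IH] //=; rewrite subst_cat IH. Qed.

Lemma subst_pw (X Y : Type) (g : X -> word Y) a k :
  subst g (pw a k) = pw (subst g a) k.
Proof. by case: k => m; rewrite /pw subst_nseq // subst_inv. Qed.

Lemma pw_nil (X : Type) (R : word X -> word X -> Prop) a k :
  peq R a [::] -> peq R (pw a k) [::].
Proof.
move=> h.
have hn : forall b m, peq R b [::] -> peq R (flatten (nseq m b)) [::].
  move=> b m hb; elim: m => [|m IH] /=; first exact: peq_refl.
  by have := peq_cat hb IH.
case: k => m; rewrite /pw; first exact: hn.
apply: hn; exact: (peq_inv h).
Qed.

Lemma es_nil (X : Type) (P : X -> bool) w : all (fun p => ~~ P p.1) w -> es P w = 0.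
Proof. by elim: w => [|[x b] w IH] //= /andP[/negbTE -> /IH ->]. Qed.

Lemma z_rot n (H : {set {perm 'I_n}}) (hc : forall m, (cycle_perm n ^+ m)%g \in H) m :
  m <= n -> peq (relG H) (zword n) (pos (rot m (enum 'I_n))).
Proof.
move=> hm; apply: peq_rel0; exists (cycle_perm n ^+ m)%g; first exact: hc.
by split => //; rewrite -(map_cycle_pow hm).
Qed.

Lemma z_letter n (H : {set {perm 'I_n}}) (hc : forall m, (cycle_perm n ^+ m)%g \in H)
  (x : 'I_n) b : peq (relG H) ([:: (x, b)] ++ zword n) (zword n ++ [:: (x, b)]).
Proof.
pose m := nat_of_ord x.
have hm : m < size (enum 'I_n) by rewrite size_enum_ord; exact: ltn_ord.
have hmn : m < n by exact: ltn_ord.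
pose Y := pos (drop m.+1 (enum 'I_n) ++ take m (enum 'I_n)).
have h1 : pos (rot m (enum 'I_n)) = (x, true) :: Y.
  by rewrite /rot (drop_nth x hm) nth_ord_enum.
have h2 : pos (rot m.+1 (enum 'I_n)) = Y ++ [:: (x, true)].
  by rewrite /rot (take_nth x hm) nth_ord_enum -cats1 catA /Y !pos_cat.
have zx : peq (relG H) ([:: (x, true)] ++ zword n) (zword n ++ [:: (x, true)]).
  apply: peq_trans (peq_catl _ (z_rot hc hmn)) _.
  rewrite h2 catA (_ : [:: (x, true)] ++ Y = pos (rot m (enum 'I_n))); last by rewrite h1.
  apply: peq_catr; apply: peq_sym. apply: (z_rot hc); exact: ltnW.
case: b; first exact: zx.
apply: peq_trans (_ : peq (relG H) ([:: (x, false)] ++ (zword n ++ [:: (x, true)]) ++ [:: (x, false)]) _).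
  rewrite -catA; apply: peq_catl; apply: peq_sym.
  have := peq_catl (zword n) (@peq_cancel1 _ (relG H) x true [::]); by rewrite cats0.
apply: peq_trans (peq_catl _ (peq_catr _ (peq_sym zx))) _.
rewrite !catA; apply: peq_catr; exact: (@peq_cancel1 _ _ x false).
Qed.

Lemma z_central n (H : {set {perm 'I_n}}) (hc : forall m, (cycle_perm n ^+ m)%g \in H) :
  central (relG H) (zword n).
Proof.
elim => [|[x b] w IH] /=; first by rewrite cats0; exact: peq_refl.
apply: peq_trans (peq_catl [:: (x, b)] IH) _.
rewrite catA; apply: peq_trans (peq_catr _ (z_letter hc x b)) _.
rewrite -catA; exact: peq_refl.
Qed.

Definition em n (i : gensF n) : 'I_n := val i.
Definition Aw n : word (gensF n) := pos (pmap (fun x => (insub x : option (gensF n))) (enum 'I_n)).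
Definition F0 n := filter (fun j : 'I_n => 0 < nat_of_ord j) (enum 'I_n).
Definition gF n (x : 'I_n) : word (gensF n) :=
  match (insub x : option (gensF n)) with Some y => [:: (y, true)] | None => winv (Aw n) end.
Definition psiF n := subst (@gF n).

Lemma wmap_Aw n : wmap (@em n) (Aw n) = pos (F0 n).
Proof.
rewrite /Aw wmap_pos /em /F0; congr pos.
rewrite (pmap_filter (@insubK _ _ (gensF n))); apply: eq_filter => x.
exact: isSome_insub.
Qed.

Lemma psiF_emb n w : psiF (wmap (@em n) w) = w.
Proof.
elim: w => [|[i b] w IH] //.
change ((if b then gF (em i) else winv (gF (em i))) ++ psiF (wmap (@em n) w) = (i, b) :: w).
by rewrite IH /gF /em valK; case: b.
Qed.

Lemma emb_psiF n (w : word 'I_n) :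
  all (fun p => 0 < nat_of_ord p.1) w -> wmap (@em n) (psiF w) = w.
Proof.
elim: w => [|[x b] w IH] //= /andP[hx /IH {}IH].
change (wmap (@em n) ((if b then gF x else winv (gF x)) ++ psiF w) = (x, b) :: w).
rewrite wmap_cat IH /gF (@insubT _ (fun i : 'I_n => 0 < nat_of_ord i) (gensF n) x hx).
by case: b.
Qed.

Lemma z_split n (k0 : 'I_n) : nat_of_ord k0 = 0 -> zword n = (k0, true) :: pos (F0 n).
Proof.
move=> h0; rewrite /zword {1}(enum_split k0).
have -> : filter (fun j : 'I_n => j < k0) (enum 'I_n) = [::].
  by rewrite h0 (eq_filter (a2 := pred0)) ?filter_pred0.
by rewrite /F0 h0.
Qed.

Lemma map_split n (s : {perm 'I_n}) (k : 'I_n) :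
  map s (enum 'I_n) = map s (filter (fun j : 'I_n => j < k) (enum 'I_n)) ++
                      s k :: map s (filter (fun j : 'I_n => k < j) (enum 'I_n)).
Proof. by rewrite {1}(enum_split k) map_cat. Qed.

Lemma side_nz n (s : {perm 'I_n}) (k : 'I_n) (p : pred 'I_n) : nat_of_ord (s k) = 0 ->
  (forall j, p j -> j != k) ->
  all (fun x : 'I_n => 0 < nat_of_ord x) (map s (filter p (enum 'I_n))).
Proof.
move=> h0 hp; apply/allP => x /mapP [j]; rewrite mem_filter => /andP [pj _] ->.
rewrite lt0n; apply/negP => /eqP hj.
have : s j = s k by apply: val_inj; rewrite /= hj h0.
by move/perm_inj => ejk; move: (hp j pj); rewrite ejk eqxx.
Qed.

Lemma all_pos n (s : seq 'I_n) :
  all (fun x : 'I_n => 0 < nat_of_ord x) s -> all (fun p => 0 < nat_of_ord p.1) (pos s).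
Proof. by rewrite /pos all_map. Qed.

Lemma alg_F (X : Type) (R : word X -> word X -> Prop) A P Q :
  peq R A (Q ++ P) -> peq R (P ++ winv A ++ Q) [::].
Proof.
move=> h.
apply: peq_trans (peq_catl _ (peq_catr _ (peq_inv h))) _.
rewrite winv_cat -!catA catA.
apply: peq_trans (peq_cat (peq_invr R P) (peq_invl R Q)) _; exact: peq_refl.
Qed.

Lemma alg_G (X : Type) (R : word X -> word X -> Prop) z x F P Q :
  central R z -> z = (x, true) :: F -> peq R z (P ++ (x, true) :: Q) ->
  peq R F (Q ++ P).
Proof.
move=> hc ez h.
have s1 : peq R ((x, true) :: Q ++ P) z.
  apply: peq_trans (_ : peq R ((winv P ++ P) ++ ((x, true) :: Q) ++ P) _).
    by apply: (peq_catr _ (peq_sym (peq_invl R P))).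
  rewrite -catA (catA P).
  apply: peq_trans (peq_catl _ (peq_catr _ (peq_sym h))) _.
  apply: peq_trans (peq_catl _ (peq_sym (hc P))) _.
  rewrite catA; apply: peq_trans (peq_catr _ (peq_invl R P)) _; exact: peq_refl.
apply: peq_trans (peq_sym (@peq_cancel1 _ R x false F)) _.
rewrite /= -ez.
apply: peq_trans (peq_catl [:: (x, false)] (peq_sym s1)) _.
exact: (@peq_cancel1 _ R x false).
Qed.

Lemma gF0 n (k0 : 'I_n) : nat_of_ord k0 = 0 -> gF k0 = winv (Aw n).
Proof. by move=> h; rewrite /gF insubN //; rewrite -[val k0]/(nat_of_ord k0) h. Qed.

Lemma psiF_pos_F0 n : psiF (pos (F0 n)) = Aw n.
Proof. by rewrite -wmap_Aw psiF_emb. Qed.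

Lemma rel_psiF n (H : {set {perm 'I_n}}) (hn : 0 < n) l r :
  relG H l r -> peq (relF H) (psiF l) (psiF r).
Proof.
case=> s sH [-> ->].
pose k0 : 'I_n := Ordinal hn.
pose k := (s^-1)%g k0.
have hk : s k = k0 by rewrite /k permKV.
have hk0 : nat_of_ord (s k) = 0 by rewrite hk.
pose P := map s (filter (fun j : 'I_n => j < k) (enum 'I_n)).
pose Q := map s (filter (fun j : 'I_n => k < j) (enum 'I_n)).
have hP : all (fun p => 0 < nat_of_ord p.1) (pos P).
  apply: all_pos; apply: side_nz hk0 _ => j hj; apply/eqP => e; by rewrite e ltnn in hj.
have hQ : all (fun p => 0 < nat_of_ord p.1) (pos Q).
  apply: all_pos; apply: side_nz hk0 _ => j hj; apply/eqP => e; by rewrite e ltnn in hj.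
have eR : pos [seq s i | i <- enum 'I_n] = pos P ++ (k0, true) :: pos Q.
  by rewrite (map_split s k) pos_cat hk.
have eL : pos (enum 'I_n) = (k0, true) :: pos (F0 n) by rewrite -z_split.
have hrel : relF H (Aw n) (psiF (pos Q) ++ psiF (pos P)).
  exists s => //; exists k; split => //; split.
    exact: wmap_Aw.
  change (wmap (@em n) (psiF (pos Q) ++ psiF (pos P)) = pos (Q ++ P)).
  by rewrite wmap_cat !emb_psiF // pos_cat.
rewrite eR eL /psiF subst_cat -/(psiF _).
change (peq (relF H) ((gF k0) ++ psiF (pos (F0 n)))
             (psiF (pos P) ++ (gF k0 ++ psiF (pos Q)))).
rewrite gF0 // psiF_pos_F0.
apply: peq_trans (peq_invl _ _) _; apply: peq_sym.
exact: alg_F (peq_rel0 hrel).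
Qed.

Lemma rel_em n (H : {set {perm 'I_n}}) (hc : forall m, (cycle_perm n ^+ m)%g \in H) l r :
  relF H l r -> peq (relG H) (wmap (@em n) l) (wmap (@em n) r).
Proof.
case=> t tH [k [hk0 [hl hr]]].
change (wmap (@em n) l = pos (F0 n)) in hl.
change (wmap (@em n) r = pos ([seq t j | j <- filter (fun j : 'I_n => k < j) (enum 'I_n)]
                      ++ [seq t j | j <- filter (fun j : 'I_n => j < k) (enum 'I_n)])) in hr.
rewrite hl hr pos_cat.
apply: (alg_G (z_central hc) (z_split hk0)).
have h : peq (relG H) (zword n) (pos [seq t i | i <- enum 'I_n]).
  by apply: peq_rel0; exists t.
by move: h; rewrite (map_split t k) pos_cat.
Qed.

Local Open Scope ring_scope.

Definition Z0 n (x : 'I_n) : bool := nat_of_ord x == 0%N.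

Lemma es_pos0 n (w : word 'I_n) : all (fun p => 0 < nat_of_ord p.1)%N w -> es (@Z0 n) w = 0.
Proof.
move=> h; apply: es_nil; apply: sub_all h => p; by rewrite /Z0 lt0n.
Qed.

Lemma es_z n (k0 : 'I_n) : nat_of_ord k0 = 0%N -> es (@Z0 n) (zword n) = 1.
Proof.
move=> h; rewrite (z_split h) /= es_pos0 ?addr0 /Z0 ?h //.
by apply: all_pos; rewrite /F0 all_filter; apply/allP => x _; apply/implyP.
Qed.

Lemma rel_es n (H : {set {perm 'I_n}}) (hn : (0 < n)%N) l r :
  relG H l r -> es (@Z0 n) l = es (@Z0 n) r.
Proof.
case=> s sH [-> ->].
pose k0 : 'I_n := Ordinal hn.
pose k := (s^-1)%g k0.
have hk : s k = k0 by rewrite /k permKV.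
have hk0 : nat_of_ord (s k) = 0%N by rewrite hk.
rewrite -/(zword n) (es_z (k0 := k0)) // (map_split s k) pos_cat es_cat /= !es_pos0.
- by rewrite hk /Z0 /= add0r addr0.
- apply: all_pos; apply: side_nz hk0 _ => j hj; apply/eqP => e; by rewrite e ltnn in hj.
- apply: all_pos; apply: side_nz hk0 _ => j hj; apply/eqP => e; by rewrite e ltnn in hj.
Qed.

Lemma wmap_em_pos n (w : word (gensF n)) : all (fun p => 0 < nat_of_ord p.1)%N (wmap (@em n) w).
Proof. by rewrite /wmap all_map; apply/allP => [[i b]] _ /=; exact: (valP i). Qed.

Lemma psiF_z n (k0 : 'I_n) : nat_of_ord k0 = 0%N -> psiF (zword n) = winv (Aw n) ++ Aw n.
Proof.
move=> h; rewrite (z_split h).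
change (gF k0 ++ psiF (pos (F0 n)) = winv (Aw n) ++ Aw n).
by rewrite gF0 // psiF_pos_F0.
Qed.

Lemma pw1 (X : Type) (a : word X) : pw a 1 = a ++ [::].
Proof. by []. Qed.

Lemma pwN1 (X : Type) (a : word X) : pw a (-1) = winv a ++ [::].
Proof. by []. Qed.

Lemma pw0 (X : Type) (a : word X) : pw a 0 = [::].
Proof. by []. Qed.

Lemma letter_surj n (H : {set {perm 'I_n}}) (hc : forall m, (cycle_perm n ^+ m)%g \in H)
  (x : 'I_n) (b : bool) :
  peq (relG H) (wmap (@em n) (if b then gF x else winv (gF x)) ++
                pw (zword n) (if Z0 x then (if b then 1 else -1) else 0)) [:: (x, b)].
Proof.
rewrite /gF /Z0; case: insubP => [u hx ux | hx].
  rewrite (negbTE (lt0n_neq0 hx)) pw0 cats0.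
  by case: b => /=; rewrite /em ux; exact: peq_refl.
have h0 : nat_of_ord x = 0%N by move: hx; rewrite lt0n negbK => /eqP.
rewrite h0 eqxx.
have ez := z_split h0.
have hA := wmap_Aw n.
case: b.
  rewrite pw1 cats0 wmap_inv hA.
  apply: peq_trans (z_central hc _) _.
  rewrite {1}ez.
  by have := peq_catl [:: (x, true)] (peq_invr (relG H) (pos (F0 n))); rewrite cats0.
rewrite pwN1 cats0 winvK hA ez winv_cons /= catA.
by have := peq_catr [:: (x, false)] (peq_invr (relG H) (pos (F0 n))).
Qed.

Lemma surj n (H : {set {perm 'I_n}}) (hc : forall m, (cycle_perm n ^+ m)%g \in H) g :
  peq (relG H) (wmap (@em n) (psiF g) ++ pw (zword n) (es (@Z0 n) g)) g.
Proof.
elim: g => [|[x b] g IH]; first exact: peq_refl.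
change (peq (relG H) (wmap (@em n) ((if b then gF x else winv (gF x)) ++ psiF g) ++
   pw (zword n) ((if Z0 x then (if b then 1 else -1) else 0) + es (@Z0 n) g)) ((x, b) :: g)).
set gl := (if b then _ else _).
set c := (if Z0 x then _ else _).
rewrite wmap_cat -catA.
set wpg := wmap (@em n) (psiF g).
apply: peq_trans (peq_catl _ (peq_catl _ (pw_add _ _ _ _))) _.
rewrite (catA wpg).
apply: peq_trans (peq_catl _ (peq_catr _ (central_pw c (z_central hc) _))) _.
rewrite -!catA catA.
apply: peq_trans (peq_catl _ IH) _.
exact: (peq_catr _ (letter_surj hc x b)).
Qed.

Local Close Scope ring_scope.
Unset Implicit Arguments.

Theorem mainTheorem10 (n : nat) (H : {group {perm 'I_n}}) :
  2 < n -> (<[cycle_perm n]> \subset H)%g ->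
  exists phi : word (gensF n) * int -> word 'I_n,
    [/\ forall w1 w2 k, peq (relF H) w1 w2 -> peq (relG H) (phi (w1, k)) (phi (w2, k)),
        forall w1 w2 (k1 k2 : int),
          peq (relG H) (phi (w1 ++ w2, (k1 + k2)%R)) (phi (w1, k1) ++ phi (w2, k2)),
        forall w1 w2 k1 k2, peq (relG H) (phi (w1, k1)) (phi (w2, k2)) ->
          peq (relF H) w1 w2 /\ k1 = k2,
        forall g, exists p, peq (relG H) (phi p) g
      & peq (relG H) (phi ([::], 1%R)) (zword n)].
Proof.
move=> hn3 hsub.
have hn : 0 < n by apply: leq_trans hn3.
have hc : forall m, (cycle_perm n ^+ m)%g \in H.
  by move=> m; apply: (subsetP hsub); exact: mem_cycle.
pose k0 : 'I_n := Ordinal hn.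
have hk0 : nat_of_ord k0 = 0 by [].
exists (fun p => wmap (@em n) p.1 ++ pw (zword n) p.2); split.
- move=> w1 w2 k h /=; apply: peq_catr.
  rewrite !wmap_subst; apply: (peq_subst _ h) => l r hlr.
  rewrite -!wmap_subst; exact: rel_em.
- move=> w1 w2 k1 k2 /=.
  rewrite wmap_cat -!catA; apply: peq_catl.
  apply: peq_trans (peq_catl _ (pw_add _ _ _ _)) _.
  rewrite !catA; apply: peq_catr; exact: central_pw k1 (z_central hc) _.
- move=> w1 w2 k1 k2 /= h; split.
    have := peq_subst (@rel_psiF n H hn) h.
    rewrite !subst_cat -!/(psiF _) !psiF_emb /psiF !subst_pw -/(psiF (zword n)) (psiF_z hk0) => h'.
    have pz : peq (relF H) (winv (Aw n) ++ Aw n) [::] by exact: peq_invl.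
    apply: peq_trans (_ : peq _ (w1 ++ pw (winv (Aw n) ++ Aw n) k1) _).
      by have := peq_catl w1 (peq_sym (pw_nil k1 pz)); rewrite cats0.
    apply: peq_trans h' _.
    by have := peq_catl w2 (pw_nil k2 pz); rewrite cats0.
  have := peq_es (@rel_es n H hn) h.
  by rewrite !es_cat (es_pos0 (wmap_em_pos w1)) (es_pw _ (es_z hk0)) (es_pos0 (wmap_em_pos w2)) (es_pw _ (es_z hk0)) !GRing.add0r.
- move=> g; exists (psiF g, es (@Z0 n) g); exact: surj.
- by rewrite /= cats0; exact: peq_refl.
Qed.
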